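(* Let $G$ be a graph (without multiple edges) on the node set $\{1,\dots,N\}$, where $N=n_1+n_2$ with $n_1,n_2\ge 2$ and $N\ge 4$, and assign to each edge $(i,j)\in G$ a fixed real weight $w_{ij}$. Let the labels $(g_1,\dots,g_N)$ be uniformly distributed over all binary vectors with exactly $n_1$ zeros and $n_2$ ones, and set $R_1^w=\sum_{(i,j)\in G} w_{ij}I(g_i=g_j=0)$, $R_2^w=\sum_{(i,j)\in G} w_{ij}I(g_i=g_j=1)$. Define $S_1=\sum_{(i,j)\in G}w_{ij}^2$, $S_2=\sum_{i=1}^N\Big(\sum_{j:(i,j)\in G}w_{ij}\Big)^2-S_1$ (equivalently, the sum of $w_ew_f$ over ordered pairs $(e,f)$ of edges of $G$ sharing at least one endpoint, the case $e=f$ included once), and $S_3=\Big(\sum_{(i,j)\in G}w_{ij}\Big)^2$ (the sum of $w_ew_f$ over all ordered pairs of edges $(e,f)$, including $e=f$). Then, writing $K=\frac{n_1n_2(n_1-1)(n_2-1)}{N(N-1)(N-2)(N-3)}$, $$\mathbf{E}(R_1^w)=\sum_{(i,j)\in G}w_{ij}\frac{n_1(n_1-1)}{N(N-1)},\qquad \mathbf{E}(R_2^w)=\sum_{(i,j)\in G}w_{ij}\frac{n_2(n_2-1)}{N(N-1)},$$ $$\mathbf{Var}(R_1^w)=K\Big\{-S_2+\tfrac{2(2N-3)}{N(N-1)}S_3+\tfrac{N-3}{n_2-1}(S_1+S_2)-\tfrac{4(N-3)}{N(n_2-1)}S_3\Big\},$$ $$\mathbf{Var}(R_2^w)=K\Big\{-S_2+\tfrac{2(2N-3)}{N(N-1)}S_3+\tfrac{N-3}{n_1-1}(S_1+S_2)-\tfrac{4(N-3)}{N(n_1-1)}S_3\Big\},$$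 $$\mathbf{Cov}(R_1^w,R_2^w)=K\Big\{-S_2+\tfrac{2(2N-3)}{N(N-1)}S_3\Big\}.$$
   Context: The labels $g_i$ encode sample membership of the pooled observations ($g_i=0$: first sample of size $n_1$; $g_i=1$: second sample of size $n_2$); the uniform distribution over label vectors with the given counts is the permutation null distribution. Edges are unordered pairs, each counted once in sums over $(i,j)\in G$. *)

(* Defs.v *)
From HB Require Import structures.
From mathcomp Require Import all_boot all_order all_algebra.
Set Implicit Arguments. Unset Strict Implicit. Unset Printing Implicit Defensive.
Import Order.TTheory GRing.Theory Num.Theory.
Local Open Scope ring_scope.

(* Label vectors g : 'I_N -> bool ; g i = false encodes g_i = 0 (first sample),
   g i = true encodes g_i = 1 (second sample). *)
Definition labels (N n2 : nat) : {set {ffun 'I_N -> bool}} :=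
  [set g : {ffun 'I_N -> bool} | #|[set i | g i]| == n2].

Definition Eperm {R : realFieldType} (N n2 : nat)
  (X : {ffun 'I_N -> bool} -> R) : R :=
  (\sum_(g in labels N n2) X g) / #|labels N n2|%:R.

Definition Covperm {R : realFieldType} (N n2 : nat)
  (X Y : {ffun 'I_N -> bool} -> R) : R :=
  Eperm n2 (fun g => (X g - Eperm n2 X) * (Y g - Eperm n2 Y)).

Definition Varperm {R : realFieldType} (N n2 : nat)
  (X : {ffun 'I_N -> bool} -> R) : R := Covperm n2 X X.

(* A simple graph is a set G of 2-element subsets (edges) of the node set;
   w assigns a weight to each edge. *)
Definition R1w {R : realFieldType} {N : nat} (G : {set {set 'I_N}})
  (w : {set 'I_N} -> R) (g : {ffun 'I_N -> bool}) : R :=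
  \sum_(e in G) w e *+ [forall i in e, ~~ g i].

Definition R2w {R : realFieldType} {N : nat} (G : {set {set 'I_N}})
  (w : {set 'I_N} -> R) (g : {ffun 'I_N -> bool}) : R :=
  \sum_(e in G) w e *+ [forall i in e, g i].

Definition S1 {R : realFieldType} {N : nat} (G : {set {set 'I_N}})
  (w : {set 'I_N} -> R) : R := \sum_(e in G) w e ^+ 2.

Definition S2 {R : realFieldType} {N : nat} (G : {set {set 'I_N}})
  (w : {set 'I_N} -> R) : R :=
  \sum_(i : 'I_N) (\sum_(e in G | i \in e) w e) ^+ 2 - S1 G w.

Definition S3 {R : realFieldType} {N : nat} (G : {set {set 'I_N}})
  (w : {set 'I_N} -> R) : R := (\sum_(e in G) w e) ^+ 2.

(* Main.v *)
Require Import Defs.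
From HB Require Import structures.
From mathcomp Require Import all_boot all_order all_algebra.
From mathcomp Require Import zify ring lra.
Import Order.TTheory GRing.Theory Num.Theory.
Set Implicit Arguments. Unset Strict Implicit. Unset Printing Implicit Defensive.

Lemma down n m : (n * 'C(n - 1, m) = (n - m) * 'C(n, m))%N.
Proof. by rewrite subn1 mul_bin_down. Qed.

Lemma diag n m : (n * 'C(n - 1, m) = m.+1 * 'C(n, m.+1))%N.
Proof. by rewrite subn1 mul_bin_diag. Qed.

Lemma B2 N p q : (q + p = N)%N -> (2 <= q)%N ->
  ('C(N - 2, p) * (N * (N - 1)) = q * (q - 1) * 'C(N, p))%N.
Proof.
move=> NE q2.
have d1 := down N p.
have d2 := down (N - 1) p.
rewrite (_ : N - 1 - 1 = N - 2)%N in d2; last by lia.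
rewrite (_ : N - p = q)%N in d1; last by lia.
rewrite (_ : N - 1 - p = q - 1)%N in d2; last by lia.
rewrite (_ : 'C(N - 2, p) * (N * (N - 1)) = N * ((N - 1) * 'C(N - 2, p)))%N; last by ring.
by rewrite d2 mulnCA d1; ring.
Qed.

Lemma B3 N p q : (q + p = N)%N -> (2 <= q)%N ->
  ('C(N - 3, p) * (N * (N - 1) * (N - 2)) = q * (q - 1) * (q - 2) * 'C(N, p))%N.
Proof.
move=> NE q2.
have b2 := B2 NE q2.
have d := down (N - 2) p.
rewrite (_ : N - 2 - 1 = N - 3)%N in d; last by lia.
rewrite (_ : N - 2 - p = q - 2)%N in d; last by lia.
rewrite (_ : 'C(N - 3, p) * (N * (N - 1) * (N - 2)) = ((N - 2) * 'C(N - 3, p)) * (N * (N - 1)))%N; last by ring.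
by rewrite d -mulnA b2; ring.
Qed.

Lemma B4 N p q : (q + p = N)%N -> (2 <= q)%N ->
  ('C(N - 4, p) * (N * (N - 1) * (N - 2) * (N - 3)) = q * (q - 1) * (q - 2) * (q - 3) * 'C(N, p))%N.
Proof.
move=> NE q2.
have b3 := B3 NE q2.
have d := down (N - 3) p.
rewrite (_ : N - 3 - 1 = N - 4)%N in d; last by lia.
rewrite (_ : N - 3 - p = q - 3)%N in d; last by lia.
rewrite (_ : 'C(N - 4, p) * (N * (N - 1) * (N - 2) * (N - 3)) = ((N - 3) * 'C(N - 4, p)) * (N * (N - 1) * (N - 2)))%N; last by ring.
by rewrite d -mulnA b3; ring.
Qed.

Lemma BP N p q : (q + p = N)%N -> (2 <= p)%N ->
  ('C(N - 2, p - 2) * (N * (N - 1)) = p * (p - 1) * 'C(N, p))%N.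
Proof.
move=> NE p2.
have d1 := diag N (p - 1).
have d2 := diag (N - 1) (p - 2).
rewrite (_ : (p - 1).+1 = p)%N in d1; last by lia.
rewrite (_ : (p - 2).+1 = p - 1)%N in d2; last by lia.
rewrite (_ : N - 1 - 1 = N - 2)%N in d2; last by lia.
rewrite (_ : 'C(N - 2, p - 2) * (N * (N - 1)) = N * ((N - 1) * 'C(N - 2, p - 2)))%N; last by ring.
by rewrite d2 mulnCA d1; ring.
Qed.

Lemma BM N p q : (q + p = N)%N -> (2 <= p)%N -> (2 <= q)%N ->
  ('C(N - 2 - 2, p - 2) * (N * (N - 1) * (N - 2) * (N - 3)) = p * (p - 1) * q * (q - 1) * 'C(N, p))%N.
Proof.
move=> NE p2 q2.
have bp := BP NE p2.
have d3 := down (N - 2) (p - 2).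
have d4 := down (N - 3) (p - 2).
rewrite (_ : N - 2 - 1 = N - 3)%N in d3; last by lia.
rewrite (_ : N - 2 - (p - 2) = q)%N in d3; last by lia.
rewrite (_ : N - 3 - 1 = N - 2 - 2)%N in d4; last by lia.
rewrite (_ : N - 3 - (p - 2) = q - 1)%N in d4; last by lia.
rewrite (_ : 'C(N - 2 - 2, p - 2) * (N * (N - 1) * (N - 2) * (N - 3)) =
   ((N - 3) * 'C(N - 2 - 2, p - 2)) * (N - 2) * (N * (N - 1)))%N; last by ring.
rewrite d4.
rewrite (_ : (q - 1) * 'C(N - 3, p - 2) * (N - 2) * (N * (N - 1)) =
   (q - 1) * ((N - 2) * 'C(N - 3, p - 2)) * (N * (N - 1)))%N; last by ring.
rewrite d3.
rewrite (_ : (q - 1) * (q * 'C(N - 2, p - 2)) * (N * (N - 1)) = (q - 1) * q * ('C(N - 2, p - 2) * (N * (N - 1))))%N; last by ring.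
by rewrite bp; ring.
Qed.

Definition Dset N p (S T : {set 'I_N}) : {set {ffun 'I_N -> bool}} :=
  [set g : {ffun 'I_N -> bool} | [&& #|[set i | g i]| == p,
     [forall i in S, ~~ g i] & [forall i in T, g i]]].

Lemma cnt N p (S T : {set 'I_N}) : [disjoint S & T] -> (#|T| <= p)%N ->
  #|Dset p S T| = 'C(#|~: (S :|: T)|, p - #|T|).
Proof.
move=> dST leTp.
pose f (g : {ffun 'I_N -> bool}) := [set i | g i] :\: T.
have injf : {in Dset p S T &, injective f}.
  move=> g h; rewrite !inE => /and3P[_ _ /forallP gT] /and3P[_ _ /forallP hT] /setP E.
  apply/ffunP => i; move: (E i); rewrite !inE.
  case iT: (i \in T); last by [].
  by move: (gT i) (hT i); rewrite iT /= => -> ->.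
rewrite -(card_in_imset injf) -cards_draws; apply: eq_card => B.
rewrite !inE; apply/imsetP/andP.
- case=> g; rewrite inE => /and3P[/eqP cg /forallP gS /forallP gT] ->.
  split.
    apply/subsetP => i; rewrite !inE => /andP[iT gi].
    rewrite negb_or iT andbT; apply/negP => iS.
    by move: (gS i); rewrite iS gi.
  rewrite cardsD; apply/eqP; rewrite -cg; congr (_ - _)%N.
  apply: eq_card => i; rewrite !inE; case iT: (i \in T); last by rewrite andbF.
  by move: (gT i); rewrite iT /= => ->.
- case=> /subsetP sB /eqP cB.
  have BT : [disjoint B & T].
    rewrite disjoint_subset; apply/subsetP => i /sB; rewrite !inE negb_or.
    by case/andP.
  exists [ffun i => (i \in B) || (i \in T)].
    rewrite inE; apply/and3P; split.
    + have -> : [set i | [ffun i => (i \in B) || (i \in T)] i] = B :|: T.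
        by apply/setP => i; rewrite !inE ffunE.
      rewrite cardsU (disjoint_setI0 BT) cards0 subn0 cB subnK //.
    + apply/forallP => i; apply/implyP => iS; rewrite ffunE negb_or.
      apply/andP; split.
        by apply/negP => /sB; rewrite !inE iS.
      by rewrite (disjointFr dST iS).
    + by apply/forallP => i; apply/implyP => iT; rewrite ffunE iT orbT.
  apply/setP => i; rewrite !inE ffunE.
  case iT: (i \in T); rewrite /= ?orbT ?orbF //.
  by rewrite (disjointFl BT iT).
Qed.

Lemma cardC' N (S : {set 'I_N}) : #|~: S| = (N - #|S|)%N.
Proof. have := cardsC S; rewrite card_ord => E; lia. Qed.

Lemma cntFT N p (S T : {set 'I_N}) : [disjoint S & T] -> (#|T| <= p)%N ->
  #|[set g | (g \in labels N p) && ([forall i in S, ~~ g i] && [forall i in T, g i])]|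
   = 'C(N - #|S| - #|T|, p - #|T|).
Proof.
move=> dST leT; rewrite -subnDA.
have -> : (#|S| + #|T| = #|S :|: T|)%N.
  by rewrite cardsU (disjoint_setI0 dST) cards0 subn0.
rewrite -cardC' -(cnt dST leT); apply: eq_card => g.
by rewrite !inE.
Qed.

Lemma cntF N p (S : {set 'I_N}) :
  #|[set g | (g \in labels N p) && [forall i in S, ~~ g i]]| = 'C(N - #|S|, p).
Proof.
have := @cntFT N p S set0; rewrite cards0 !subn0 => <- //; last first.
  by rewrite disjoints_subset setC0 subsetT.
apply: eq_card => g; rewrite !inE.
have -> : [forall i in set0, g i] by apply/forallP => i; rewrite inE.
by rewrite andbT.
Qed.

Lemma card_labels N p : #|labels N p| = 'C(N, p).
Proof.
have := @cntF N p set0; rewrite cards0 subn0 => <-.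
apply: eq_card => g; rewrite [in RHS]in_set.
have -> : [forall i in set0, ~~ g i] by apply/forallP => i; rewrite inE.
by rewrite andbT.
Qed.

Lemma cnt_edge2 N p (e f : {set 'I_N}) : #|e| = 2%N -> #|f| = 2%N ->
  #|[set g | (g \in labels N p) && [forall i in e :|: f, ~~ g i]]|
   = 'C(N - (4 - #|e :&: f|), p).
Proof.
move=> ce cf; rewrite cntF; congr ('C(N - _, p)).
by have := cardsUI e f; rewrite ce cf => E; lia.
Qed.

Lemma cnt_mixed N p (e f : {set 'I_N}) : #|e| = 2%N -> #|f| = 2%N -> (2 <= p)%N ->
  #|[set g | (g \in labels N p) && ([forall i in e, ~~ g i] && [forall i in f, g i])]|
   = if #|e :&: f| == 0%N then 'C(N - 2 - 2, p - 2) else 0%N.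
Proof.
move=> ce cf p2.
case: eqP => [/eqP|/eqP]; rewrite cards_eq0.
  rewrite setI_eq0 => dis; by rewrite cntFT ?ce ?cf.
case/set0Pn => i; rewrite inE => /andP[ie if_].
apply/eqP; rewrite cards_eq0; apply/eqP/setP => g; rewrite !inE.
apply/negP => /andP[_ /andP[/forallP H1 /forallP H2]].
by move: (implyP (H1 i) ie) (implyP (H2 i) if_) => /negP.
Qed.

Definition negf N (g : {ffun 'I_N -> bool}) : {ffun 'I_N -> bool} := [ffun i => ~~ g i].

Lemma negfK N : involutive (@negf N).
Proof. by move=> g; apply/ffunP => i; rewrite !ffunE negbK. Qed.

Lemma negf_labels N p g : (p <= N)%N -> (negf g \in labels N (N - p)) = (g \in labels N p).
Proof.
move=> pN; rewrite !inE.
have -> : [set i | negf g i] = ~: [set i | g i].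
  by apply/setP => i; rewrite !inE ffunE.
rewrite cardC'.
set a := #|[set i | g i]|.
have h : (a <= N)%N by rewrite /a -[X in (_ <= X)%N]card_ord max_card.
apply/eqP/eqP => H; lia.
Qed.

Local Open Scope ring_scope.

Lemma Eperm_neg (R : realFieldType) N p (X : {ffun 'I_N -> bool} -> R) : (p <= N)%N ->
  Eperm p (fun g => X (negf g)) = Eperm (N - p) X.
Proof.
move=> pN; rewrite /Eperm !card_labels bin_sub //; congr (_ / _).
rewrite [RHS](reindex (@negf N)) /=; last first.
  by exists (@negf N) => g _; rewrite negfK.
by apply: eq_bigl => g; rewrite negf_labels.
Qed.

Lemma Eperm_ext (R : realFieldType) N p (X Y : {ffun 'I_N -> bool} -> R) :
  (forall g, X g = Y g) -> Eperm p X = Eperm p Y.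
Proof. by move=> H; rewrite /Eperm; congr (_ / _); apply: eq_bigr => g _. Qed.

Lemma Varperm_neg (R : realFieldType) N p (X : {ffun 'I_N -> bool} -> R) : (p <= N)%N ->
  Varperm p (fun g => X (negf g)) = Varperm (N - p) X.
Proof.
move=> pN; rewrite /Varperm /Covperm Eperm_neg //.
exact: (Eperm_neg (fun g => (X g - Eperm (N - p) X) * (X g - Eperm (N - p) X)) pN).
Qed.

Lemma R2_neg (R : realFieldType) N (G : {set {set 'I_N}}) (w : {set 'I_N} -> R) g :
  R2w G w g = R1w G w (negf g).
Proof.
rewrite /R1w /R2w; apply: eq_bigr => e _; congr (_ *+ nat_of_bool _).
by apply: eq_forallb => i; rewrite ffunE negbK.
Qed.

Lemma sum_ind (R : realFieldType) N (e f : {set 'I_N}) :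
  \sum_(i : 'I_N) ((i \in e) && (i \in f))%:R = #|e :&: f|%:R :> R.
Proof.
rewrite -natr_sum; congr (_ %:R).
rewrite -sum1_card [RHS]big_mkcond /=; apply: eq_bigr => i _.
by rewrite inE; case: (_ && _).
Qed.

Lemma T2_eq (R : realFieldType) N (G : {set {set 'I_N}}) (w : {set 'I_N} -> R) :
  S1 G w + S2 G w = \sum_(e in G) \sum_(f in G) w e * w f * #|e :&: f|%:R.
Proof.
rewrite /S2 addrC subrK.
transitivity (\sum_(i : 'I_N) \sum_(e in G) \sum_(f in G)
                 w e * w f * ((i \in e) && (i \in f))%:R).
  apply: eq_bigr => i _; rewrite expr2 mulr_suml big_mkcondr /=.
  apply: eq_bigr => e eG.
  case ie: (i \in e) => /=.
    rewrite mulr_sumr big_mkcondr /=; apply: eq_bigr => f _.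
    by case: (i \in f); rewrite ?mulr1 ?mulr0.
  by rewrite big1 // => f _; rewrite mulr0.
rewrite exchange_big /=; apply: eq_bigr => e _.
rewrite exchange_big /=; apply: eq_bigr => f _.
by rewrite -mulr_sumr sum_ind.
Qed.

Lemma S3_eq (R : realFieldType) N (G : {set {set 'I_N}}) (w : {set 'I_N} -> R) :
  S3 G w = \sum_(e in G) \sum_(f in G) w e * w f.
Proof.
by rewrite /S3 expr2 mulr_suml; apply: eq_bigr => e _; rewrite mulr_sumr.
Qed.

Lemma S1_eq (R : realFieldType) N (G : {set {set 'I_N}}) (w : {set 'I_N} -> R) :
  S1 G w = \sum_(e in G) \sum_(f in G) w e * w f * (e == f)%:R.
Proof.
apply: eq_bigr => e eG; rewrite (bigD1 e) //= eqxx mulr1 big1 ?addr0 ?expr2 //.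
by move=> f /andP[_ fe]; rewrite eq_sym (negbTE fe) mulr0.
Qed.

Lemma graph_dec (R : realFieldType) N (G : {set {set 'I_N}}) (w : {set 'I_N} -> R)
  (h : nat -> R) :
  (forall e, e \in G -> #|e| = 2%N) ->
  \sum_(e in G) \sum_(f in G) w e * w f * h #|e :&: f| =
  h 0%N * S3 G w + (h 1%N - h 0%N) * (S1 G w + S2 G w)
    + (h 2%N - 2 * h 1%N + h 0%N) * S1 G w.
Proof.
move=> G2.
have key : forall e f, e \in G -> f \in G -> h #|e :&: f| =
   h 0%N + (h 1%N - h 0%N) * #|e :&: f|%:R + (h 2%N - 2 * h 1%N + h 0%N) * (e == f)%:R.
  move=> e f eG fG.
  have le2 : (#|e :&: f| <= 2)%N by rewrite -(G2 e eG) subset_leq_card // subsetIl.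
  have eq2 : (#|e :&: f| == 2%N) = (e == f).
    apply/eqP/eqP => [c2|->]; last by rewrite setIid G2.
    have /eqP E1 : e :&: f == e by rewrite eqEcard subsetIl c2 G2.
    have /eqP E2 : e :&: f == f by rewrite eqEcard subsetIr c2 G2.
    by rewrite -E1 {1}E2.
  move: le2 eq2; case: #|e :&: f| => [|[|[|k]]] //= _ <-; rewrite /=.
  - by rewrite mulr0 mulr0 addr0 addr0.
  - by rewrite mulr0 addr0 mulr1 addrC subrK.
  - by rewrite mulr1; ring.
under eq_bigr => e eG do under eq_bigr => f fG do rewrite (key e f eG fG).
rewrite T2_eq S3_eq S1_eq !mulr_sumr -!big_split /=; apply: eq_bigr => e _.
rewrite !mulr_sumr -!big_split /=; apply: eq_bigr => f _.
ring.
Qed.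

Lemma Cov_eq (R : realFieldType) N p (X Y : {ffun 'I_N -> bool} -> R) :
  #|labels N p| != 0%N ->
  Covperm p X Y = Eperm p (fun g => X g * Y g) - Eperm p X * Eperm p Y.
Proof.
move=> L0; rewrite /Covperm /Eperm.
set M := #|labels N p|%:R.
set sX := \sum_(g in labels N p) X g.
set sY := \sum_(g in labels N p) Y g.
have M0 : M != 0 by rewrite pnatr_eq0.
rewrite (eq_bigr (fun g => X g * Y g - (sX / M) * Y g - (sY / M) * X g + (sX / M) * (sY / M)));
  last by move=> g _; ring.
rewrite !big_split /= !sumrN -!mulr_sumr sumr_const -/sY -/sX -/M.
rewrite -mulr_natr -/M.
by field.
Qed.

Lemma sum_cnt (R : realFieldType) N p (c : R) (P : pred {ffun 'I_N -> bool}) :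
  \sum_(g in labels N p) c *+ P g = c *+ #|[set g | (g \in labels N p) && P g]|.
Proof.
rewrite sumrMnr; congr (_ *+ _).
rewrite -sum1_card [RHS]big_mkcond [LHS]big_mkcond /=; apply: eq_bigr => g _.
rewrite [in RHS]in_set.
by case: (g \in labels N p); case: (P g).
Qed.

Lemma E_sum1 (R : realFieldType) N p (I : finType) (A : {pred I}) (c : I -> R)
   (P : I -> pred {ffun 'I_N -> bool}) :
  Eperm p (fun g => \sum_(e in A) c e *+ P e g) =
  \sum_(e in A) c e * (#|[set g | (g \in labels N p) && P e g]|%:R / #|labels N p|%:R).
Proof.
rewrite /Eperm exchange_big /= mulr_suml; apply: eq_bigr => e _.
by rewrite (sum_cnt p) -[_ *+ #|_|]mulr_natr mulrA.
Qed.

Lemma E_sum2 (R : realFieldType) N p (I : finType) (A : {pred I}) (c : I -> I -> R)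
   (P : I -> I -> pred {ffun 'I_N -> bool}) :
  Eperm p (fun g => \sum_(e in A) \sum_(f in A) c e f *+ P e f g) =
  \sum_(e in A) \sum_(f in A)
     c e f * (#|[set g | (g \in labels N p) && P e f g]|%:R / #|labels N p|%:R).
Proof.
rewrite /Eperm exchange_big /= mulr_suml; apply: eq_bigr => e _.
rewrite exchange_big /= mulr_suml; apply: eq_bigr => f _.
by rewrite (sum_cnt p) -[_ *+ #|_|]mulr_natr mulrA.
Qed.

Lemma prod11 (R : realFieldType) N (G : {set {set 'I_N}}) (w : {set 'I_N} -> R) g :
  R1w G w g * R1w G w g =
  \sum_(e in G) \sum_(f in G) (w e * w f) *+ [forall i in e :|: f, ~~ g i].
Proof.
rewrite /R1w mulr_suml; apply: eq_bigr => e _; rewrite mulr_sumr; apply: eq_bigr => f _.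
rewrite mulrnAl mulrnAr -mulrnA mulnb; congr (_ *+ _); congr (nat_of_bool _).
apply/andP/forallP => [[/forallP He /forallP Hf] i|H].
  apply/implyP; rewrite inE => /orP[ie|if_].
    exact: (implyP (Hf i) ie).
  exact: (implyP (He i) if_).
split; apply/forallP => i; apply/implyP => ii; apply: (implyP (H i)); by rewrite inE ii ?orbT.
Qed.

Lemma prod12 (R : realFieldType) N (G : {set {set 'I_N}}) (w : {set 'I_N} -> R) g :
  R1w G w g * R2w G w g =
  \sum_(e in G) \sum_(f in G) (w e * w f) *+ ([forall i in e, ~~ g i] && [forall i in f, g i]).
Proof.
rewrite /R1w /R2w mulr_suml; apply: eq_bigr => e _; rewrite mulr_sumr; apply: eq_bigr => f _.
by rewrite mulrnAl mulrnAr -mulrnA mulnb andbC.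
Qed.


Lemma ratio (R : realFieldType) (X Y a b : nat) : (X * a = b * Y)%N -> (a != 0)%N -> (Y != 0)%N ->
  X%:R / Y%:R = b%:R / a%:R :> R.
Proof.
move=> H a0 Y0; apply/eqP; rewrite eqr_div ?pnatr_eq0 // -!natrM; apply/eqP; congr (_%:R).
by rewrite H mulnC.
Qed.

Lemma cntT N p (T : {set 'I_N}) : (#|T| <= p)%N ->
  #|[set g | (g \in labels N p) && [forall i in T, g i]]| = 'C(N - #|T|, p - #|T|).
Proof.
move=> le; have := @cntFT N p set0 T; rewrite cards0 subn0 => <- //; last first.
  by rewrite disjoint_sym disjoints_subset setC0 subsetT.
apply: eq_card => g; rewrite !inE.
have -> : [forall i in set0, ~~ g i] by apply/forallP => i; rewrite inE.
by [].
Qed.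

Lemma cast4 (R : realFieldType) (q : nat) : (2 <= q)%N ->
  ((q * (q-1) * (q-2) * (q-3))%N%:R : R) = q%:R * (q%:R - 1) * (q%:R - 2) * (q%:R - 3).
Proof.
move=> hq; case: (ltnP q 3) => h.
  have -> : q = 2%N by lia.
  rewrite (_ : (2 * (2 - 1) * (2 - 2) * (2 - 3) = 0)%N) // mulr0n; ring.
by rewrite !natrM !natrB; try lia.
Qed.

Lemma gen (R : realFieldType) N p q (G : {set {set 'I_N}}) (w : {set 'I_N} -> R) :
  (2 <= p)%N -> (2 <= q)%N -> (q + p = N)%N -> (forall e, e \in G -> #|e| = 2%N) ->
  let K : R := (q * p * (q - 1) * (p - 1))%N%:R / (N * (N - 1) * (N - 2) * (N - 3))%N%:R in
  let A : R := - S2 G w + (2 * (2 * N - 3))%N%:R / (N * (N - 1))%N%:R * S3 G w in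
  [/\ Eperm p (R1w G w) = \sum_(e in G) w e * ((q * (q - 1))%N%:R / (N * (N - 1))%N%:R),
      Varperm p (R1w G w) = K * (A + (N - 3)%N%:R / (p - 1)%N%:R * (S1 G w + S2 G w)
               - (4 * (N - 3))%N%:R / (N * (p - 1))%N%:R * S3 G w)
    & Covperm p (R1w G w) (R2w G w) = K * A].
Proof.
move=> p2 q2 NE G2 K A.
have C0 : ('C(N, p) != 0)%N by rewrite -lt0n bin_gt0; lia.
have L0 : (#|labels N p| != 0)%N by rewrite card_labels.
have NN : (N * (N - 1) != 0)%N by rewrite -lt0n !muln_gt0; lia.
have NNNN : (N * (N - 1) * (N - 2) * (N - 3) != 0)%N.
  by rewrite -lt0n !muln_gt0; lia.
have NNN : (N * (N - 1) * (N - 2) != 0)%N.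
  by rewrite -lt0n !muln_gt0; lia.
have h2 : 'C(N - 2, p)%:R / 'C(N, p)%:R = (q * (q - 1))%N%:R / (N * (N - 1))%N%:R :> R.
  exact: ratio (B2 NE q2) NN C0.
have h3 : 'C(N - 3, p)%:R / 'C(N, p)%:R =
   (q * (q - 1) * (q - 2))%N%:R / (N * (N - 1) * (N - 2))%N%:R :> R.
  exact: ratio (B3 NE q2) NNN C0.
have h4 : 'C(N - 4, p)%:R / 'C(N, p)%:R =
   (q * (q - 1) * (q - 2) * (q - 3))%N%:R / (N * (N - 1) * (N - 2) * (N - 3))%N%:R :> R.
  exact: ratio (B4 NE q2) NNNN C0.
have hm : 'C(N - 2 - 2, p - 2)%:R / 'C(N, p)%:R =
   (p * (p - 1) * q * (q - 1))%N%:R / (N * (N - 1) * (N - 2) * (N - 3))%N%:R :> R.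
  exact: ratio (BM NE p2 q2) NNNN C0.
have hp : 'C(N - 2, p - 2)%:R / 'C(N, p)%:R = (p * (p - 1))%N%:R / (N * (N - 1))%N%:R :> R.
  exact: ratio (BP NE p2) NN C0.
have E1 : Eperm p (R1w G w) = \sum_(e in G) w e * ((q * (q - 1))%N%:R / (N * (N - 1))%N%:R).
  rewrite /R1w E_sum1 card_labels; apply: eq_bigr => e eG.
  by rewrite cntF G2 // h2.
have E2 : Eperm p (R2w G w) = \sum_(e in G) w e * ((p * (p - 1))%N%:R / (N * (N - 1))%N%:R).
  rewrite /R2w E_sum1 card_labels; apply: eq_bigr => e eG.
  by rewrite cntT G2 // hp.
split => //.
- rewrite /Varperm Cov_eq // E1.
  rewrite (Eperm_ext p (prod11 G w)) E_sum2 card_labels.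
  rewrite (eq_bigr (fun e => \sum_(f in G) w e * w f *
            (fun k => 'C(N - (4 - k), p)%:R / 'C(N, p)%:R) #|e :&: f|)); last first.
    by move=> e eG; apply: eq_bigr => f fG; rewrite cnt_edge2 ?(G2 e eG) ?(G2 f fG).
  rewrite (@graph_dec R N G w (fun k => 'C(N - (4 - k), p)%:R / 'C(N, p)%:R) G2) /= !subn0.
  rewrite (_ : (4 - 1 = 3)%N) // (_ : (4 - 2 = 2)%N) // h2 h3 h4.
  rewrite -mulr_suml /A /K /S3.
  move: (\sum_(e in G) w e) (S1 G w) (S2 G w) => sw s1 s2.
  have hx : 2 <= q%:R :> R by rewrite (ler_nat R 2 q).
  have hy : 2 <= p%:R :> R by rewrite (ler_nat R 2 p).
  rewrite ?cast4; try lia.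
  rewrite !natrM !natrB; try lia.
  rewrite -NE natrD.
  field; rewrite ?negb_and; repeat (apply/andP; split); apply/eqP; lra.
- rewrite Cov_eq // E1 E2.
  rewrite (Eperm_ext p (prod12 G w)) E_sum2 card_labels.
  rewrite (eq_bigr (fun e => \sum_(f in G) w e * w f *
            (fun k => (if k == 0%N then 'C(N - 2 - 2, p - 2) else 0%N)%:R / 'C(N, p)%:R) #|e :&: f|)); last first.
    by move=> e eG; apply: eq_bigr => f fG; rewrite cnt_mixed ?(G2 e eG) ?(G2 f fG).
  rewrite (@graph_dec R N G w (fun k => (if k == 0%N then 'C(N - 2 - 2, p - 2) else 0%N)%:R / 'C(N, p)%:R) G2) /= hm mul0r.
  rewrite -!mulr_suml /A /K /S3.
  move: (\sum_(e in G) w e) (S1 G w) (S2 G w) => sw s1 s2.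
  have hx : 2 <= q%:R :> R by rewrite (ler_nat R 2 q).
  have hy : 2 <= p%:R :> R by rewrite (ler_nat R 2 p).
  rewrite ?cast4; try lia.
  rewrite !natrM !natrB; try lia.
  rewrite -NE natrD.
  field; rewrite ?negb_and; repeat (apply/andP; split); apply/eqP; lra.
Qed.


Unset Implicit Arguments.
Set Strict Implicit.

Lemma Varperm_ext (R : realFieldType) N p (X Y : {ffun 'I_N -> bool} -> R) :
  (forall g, X g = Y g) -> Varperm p X = Varperm p Y.
Proof.
move=> H; rewrite /Varperm /Covperm (Eperm_ext p H); apply: Eperm_ext => g.
by rewrite H.
Qed.

Theorem lemma1 (R : realFieldType) (n1 n2 : nat)
  (G : {set {set 'I_(n1 + n2)}}) (w : {set 'I_(n1 + n2)} -> R) :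
  (2 <= n1)%N -> (2 <= n2)%N ->
  (forall e, e \in G -> #|e| = 2%N) ->
  let N := (n1 + n2)%N in
  let K : R := (n1 * n2 * (n1 - 1) * (n2 - 1))%N%:R /
               (N * (N - 1) * (N - 2) * (N - 3))%N%:R in
  let A : R := - S2 G w + (2 * (2 * N - 3))%N%:R / (N * (N - 1))%N%:R * S3 G w in
  [/\ Eperm n2 (R1w G w) =
        \sum_(e in G) w e * ((n1 * (n1 - 1))%N%:R / (N * (N - 1))%N%:R),
      Eperm n2 (R2w G w) =
        \sum_(e in G) w e * ((n2 * (n2 - 1))%N%:R / (N * (N - 1))%N%:R),
      Varperm n2 (R1w G w) =
        K * (A + (N - 3)%N%:R / (n2 - 1)%N%:R * (S1 G w + S2 G w)
               - (4 * (N - 3))%N%:R / (N * (n2 - 1))%N%:R * S3 G w),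
      Varperm n2 (R2w G w) =
        K * (A + (N - 3)%N%:R / (n1 - 1)%N%:R * (S1 G w + S2 G w)
               - (4 * (N - 3))%N%:R / (N * (n1 - 1))%N%:R * S3 G w)
    & Covperm n2 (R1w G w) (R2w G w) = K * A].
Proof.
move=> h1 h2 G2 N K A.
have [E1 V1 C1] := @gen R (n1 + n2) n2 n1 G w h2 h1 erefl G2.
have [E2 V2 _] := @gen R (n1 + n2) n1 n2 G w h1 h2 (addnC n2 n1) G2.
have le2 : (n2 <= n1 + n2)%N by lia.
have sub2 : (n1 + n2 - n2 = n1)%N by lia.
have ER2 : Eperm n2 (R2w G w) = Eperm n1 (R1w G w).
  by rewrite (Eperm_ext n2 (R2_neg G w)) Eperm_neg // sub2.
have VR2 : Varperm n2 (R2w G w) = Varperm n1 (R1w G w).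
  by rewrite (@Varperm_ext _ _ n2 _ _ (R2_neg G w)) Varperm_neg // sub2.
split.
- exact: E1.
- by rewrite ER2 E2.
- exact: V1.
- rewrite VR2 V2 /K; congr (_ / _ * _); congr (_%:R); ring.
- exact: C1.
Qed.
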